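(* Let $G$ be a bridgeless cubic graph and let $G_\triangle$ be the graph obtained from $G$ by replacing every vertex by a triangle. Then $G$ is $3$-edge-colorable if and only if $L(G_\triangle)=\frac{3}{2}\,l(G_\triangle)$.
   Context: Graphs are finite, undirected, without loops or multiple edges. $\nu(G)$ denotes the maximum size of a matching of $G$; a matching is maximum if it has $\nu(G)$ edges. For $F\subseteq E(G)$, $G\setminus F$ is the graph with vertex set $V(G)$ and edge set $E(G)\setminus F$. Define $L(G)=\max\{\nu(G\setminus F): F \text{ a maximum matching of } G\}$ and $l(G)=\min\{\nu(G\setminus F): F \text{ a maximum matching of } G\}$. Replacing a vertex $v$ of a cubic graph by a triangle means: delete $v$, add three new vertices $v_1,v_2,v_3$ forming a triangle, and for the three edges $vu_1,vu_2,vu_3$ formerly incident to $v$, join $v_i$ to the endpoint corresponding to $u_i$; doing this for all vertices simultaneously gives $G_\triangle$, whose edges are the triangle edges together with edges corresponding bijectively to $E(G)$. *)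

(* Defs.v *)
From mathcomp Require Import all_boot.
Set Implicit Arguments. Unset Strict Implicit. Unset Printing Implicit Defensive.

Section Graphs.
Variable T : finType.

Definition edges (r : rel T) : {set {set T}} :=
  [set [set p.1; p.2] | p in [pred p : T * T | r p.1 p.2]].

Definition matching (E M : {set {set T}}) : bool :=
  (M \subset E) &&
  [forall m1 in M, forall m2 in M, (m1 != m2) ==> [disjoint m1 & m2]].

Definition nu (E : {set {set T}}) : nat :=
  \max_(M : {set {set T}} | matching E M) #|M|.

Definition max_matching (E M : {set {set T}}) : bool :=
  matching E M && (#|M| == nu E).

Definition Lmax (E : {set {set T}}) : nat :=
  \max_(F : {set {set T}} | max_matching E F) nu (E :\: F).

(* l(G) = min { nu(G \ F) : F maximum matching of G }.  The neutral element
   #|E| is harmless: maximum matchings exist and every nu(E\F) <= #|E|. *)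
Definition lmin (E : {set {set T}}) : nat :=
  \big[minn/#|E|]_(F : {set {set T}} | max_matching E F) nu (E :\: F).

Definition simple_graph (r : rel T) : Prop := symmetric r /\ irreflexive r.

Definition cubic (r : rel T) : Prop := forall v : T, #|[set u | r v u]| = 3.

Definition bridgeless (r : rel T) : Prop :=
  forall x y : T, r x y ->
    connect (fun a b => r a b && ([set a; b] != [set x; y])) x y.

Definition three_edge_colorable (r : rel T) : Prop :=
  exists c : {set T} -> 'I_3,
    forall x y z : T, r x y -> r x z -> y != z -> c [set x; y] != c [set x; z].

End Graphs.

(* G_triangle: the vertex v is replaced by the three vertices (v,u), u a
   neighbour of v (i.e. the darts of G); (v,u)-(v,w) (u <> w) are the triangle
   edges, (v,u)-(u,v) is the edge corresponding to the edge vu of G. *)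
Definition dart (T : finType) (r : rel T) : finType := {p : T * T | r p.1 p.2}.

Definition tri_rel (T : finType) (r : rel T) : rel (dart r) :=
  fun d1 d2 =>
    ((val d1).1 == (val d2).1) && ((val d1).2 != (val d2).2)
    || ((val d1).1 == (val d2).2) && ((val d1).2 == (val d2).1).
Arguments tri_rel {T} r.

(* Main.v *)
Require Import Defs.
From mathcomp Require Import all_boot.
Set Implicit Arguments. Unset Strict Implicit. Unset Printing Implicit Defensive.


Lemma I3_cover (x y z j : 'I_3) : x != y -> y != z -> x != z -> [|| j == x, j == y | j == z].
Proof.
case: x => [[|[|[|x]]] hx] //; case: y => [[|[|[|y]]] hy] //;
case: z => [[|[|[|z]]] hz] //; case: j => [[|[|[|j]]] hj] //.
Qed.
Definition c0 : 'I_3 := @Ordinal 3 0 isT.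
Definition c1 : 'I_3 := @Ordinal 3 1 isT.
Definition c2 : 'I_3 := @Ordinal 3 2 isT.
Lemma col3 : c0 != c1 /\ c0 != c2 /\ c1 != c2.
Proof. by []. Qed.

Section Main.
Variables (T : finType) (r : rel T).
Hypotheses (symr : symmetric r) (irrr : irreflexive r) (cub : cubic r).

Local Notation D := (dart r).
Local Notation E := (edges (tri_rel r)).
Local Notation tr := (tri_rel r).

Lemma dart_neq (d : D) : (val d).1 != (val d).2.
Proof. by apply/eqP=> h; have := valP d; rewrite h irrr. Qed.

Definition rev (d : D) : D :=
  @Sub _ _ D ((val d).2, (val d).1) (eq_ind_r (fun b => b = true) (valP d) (symr _ _)).

Lemma val_rev d : val (rev d) = ((val d).2, (val d).1).
Proof. by []. Qed.

Lemma tri_irr d : tr d d = false.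
Proof. by rewrite /tri_rel !eqxx /= (negbTE (dart_neq d)). Qed.

Lemma tri_sym a b : tr a b = tr b a.
Proof.
rewrite /tri_rel; congr orb; first by rewrite eq_sym [_.2 == _]eq_sym.
by rewrite andbC eq_sym [_.2 == _]eq_sym.
Qed.

Lemma dart_eq (a b : D) : (a == b) = ((val a).1 == (val b).1) && ((val a).2 == (val b).2).
Proof.
case: a b => [[a1 a2] ha] [[b1 b2] hb] /=.
apply/eqP/andP => [[-> ->]|[/eqP e1 /eqP e2]] //.
by apply: val_inj => /=; rewrite e1 e2.
Qed.

Lemma triE a b : tr a b = (b == rev a) || ((val a).1 == (val b).1) && (a != b).
Proof.
rewrite /tri_rel !dart_eq val_rev /=.
have na := dart_neq a; have nb := dart_neq b.
move: na nb; case: a => [[a1 a2] ha]; case: b => [[b1 b2] hb] /= na nb.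
case: (a1 =P b1) => [<-|n1] /=; case: (a2 =P b2) => [<-|n2] /=;
  rewrite ?eqxx ?andbT ?andbF ?orbF //=.
all: try (rewrite ?(negbTE na) ?(negbTE nb); done).
- by rewrite (negbTE na) [a2 == a1]eq_sym (negbTE na) andbF.
- by rewrite andbC [a1 == _]eq_sym [a2 == _]eq_sym.
Qed.

Lemma edgeE a b : tr a b -> [set a; b] \in E.
Proof. by move=> h; apply/imsetP; exists (a, b). Qed.

Lemma edge_inv e : e \in E -> exists a b, tr a b /\ e = [set a; b].
Proof. by case/imsetP=> [[a b]] /= h ->; exists a, b. Qed.

Lemma tri_neq a b : tr a b -> a != b.
Proof. by apply: contraTneq => ->; rewrite tri_irr. Qed.

Lemma edge_card e : e \in E -> #|e| = 2.
Proof. by case/edge_inv=> a [b [h ->]]; rewrite cards2 tri_neq. Qed.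

Lemma edge_at e a : e \in E -> a \in e -> exists b, tr a b /\ e = [set a; b].
Proof.
case/edge_inv=> x [y [h ->]]; rewrite !inE => /orP[]/eqP->.
  by exists y.
by exists x; rewrite tri_sym setUC.
Qed.


Lemma match_sub (E' M : {set {set D}}) : E' \subset E -> matching E' M -> M \subset E.
Proof. by move=> sE /andP[sM _]; apply: subset_trans sE. Qed.

Lemma match_uniq (E' M : {set {set D}}) e1 e2 a : matching E' M -> e1 \in M -> e2 \in M ->
  a \in e1 -> a \in e2 -> e1 = e2.
Proof.
case/andP=> _ /forall_inP H m1 m2 a1 a2; apply/eqP; apply: contraTT isT => ne.
have := H _ m1 => /forall_inP /(_ _ m2); rewrite ne /= => /disjointFr /(_ a1).
by rewrite a2.
Qed.

Lemma match_card (E' M : {set {set D}}) : E' \subset E -> matching E' M -> #|cover M| = #|M| * 2.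
Proof.
move=> sE mM; have sM := match_sub sE mM.
apply: card_uniform_partition; first by move=> e /(subsetP sM) /edge_card.
apply/and3P; split => //.
  apply/trivIsetP => e1 e2 h1 h2 ne; apply/pred0P => a /=.
  apply/negbTE/negP => /andP[a1 a2]; move/eqP: ne; apply.
  exact: match_uniq mM h1 h2 a1 a2.
by apply/negP => /(subsetP sM) /edge_card; rewrite cards0.
Qed.

Lemma match_le (E' M : {set {set D}}) : E' \subset E -> matching E' M -> #|M| * 2 <= #|D|.
Proof. by move=> sE mM; rewrite -(match_card sE mM) max_card. Qed.

Lemma match_cover (E' M : {set {set D}}) a : E' \subset E -> matching E' M -> #|M| * 2 = #|D| ->
  exists2 e, e \in M & a \in e.
Proof.
move=> sE mM h.
have: cover M == [set: D] by rewrite eqEcard subsetT cardsT (match_card sE mM) h leqnn.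
move/eqP => cM; have: a \in cover M by rewrite cM inE.
by case/bigcupP => e eM ae; exists e.
Qed.

Lemma rev_rev d : rev (rev d) = d.
Proof. by apply: val_inj; rewrite !val_rev; case: (val d). Qed.

Lemma tri_rev d : tr d (rev d).
Proof. by rewrite triE eqxx. Qed.

Definition O := [set [set d; rev d] | d : D].

Lemma O_sub : O \subset E.
Proof. by apply/subsetP => e /imsetP [d _ ->]; apply: edgeE; apply: tri_rev. Qed.

Lemma outer_at x d : x \in [set d; rev d] -> [set d; rev d] = [set x; rev x].
Proof. by rewrite !inE => /orP[]/eqP->; rewrite ?rev_rev // setUC. Qed.

Lemma O_match : matching E O.
Proof.
rewrite /matching O_sub /=; apply/forall_inP => e1 /imsetP [d1 _ ->].
apply/forall_inP => e2 /imsetP [d2 _ ->]; apply/implyP => ne.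
apply/pred0P => x /=; apply/negbTE/negP => /andP [].
move=> /outer_at h1 /outer_at h2; by rewrite h1 h2 eqxx in ne.
Qed.


Lemma O_card : #|O| * 2 = #|D|.
Proof.
rewrite -(match_card (subxx E) O_match) -cardsT.
suff -> : cover O = [set: D] by [].
apply/setP => d; rewrite inE; apply/bigcupP; exists [set d; rev d]; rewrite ?inE ?eqxx //. 
exact: imset_f.
Qed.

Lemma nu_E : nu E * 2 = #|D|.
Proof.
apply/eqP; rewrite eqn_leq; apply/andP; split.
  rewrite -leq_divRL //; apply/bigmax_leqP => M mM; rewrite leq_divRL //.
  exact: match_le (subxx E) mM.
by rewrite -O_card leq_mul2r /=; apply: leq_bigmax_cond O_match.
Qed.

Lemma max_matchingE F : max_matching E F = matching E F && (#|F| * 2 == #|D|).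
Proof.
by rewrite /max_matching -nu_E eqn_mul2r.
Qed.

Definition fib (v : T) := [set d : D | (val d).1 == v].

Lemma fib_card v : #|fib v| = 3.
Proof.
rewrite -(cub v) -(@card_in_imset _ _ (fun d : D => (val d).2)).
  suff -> : [set (val d).2 | d in fib v] = [set u | r v u] by [].
  apply/setP => u; rewrite inE; apply/imsetP/idP.
    by case=> d; rewrite inE => /eqP <- ->; apply: (valP d).
  move=> h; exists (@Sub _ _ D (v, u) h) => //; by rewrite inE.
move=> a b; rewrite !inE => /eqP ha /eqP hb e; apply/eqP.
by rewrite dart_eq ha hb e !eqxx.
Qed.

Lemma card_D : #|D| = 3 * #|T|.
Proof.
rewrite -sum1_card (partition_big (fun d : D => (val d).1) xpredT) //=.
rewrite mulnC -sum_nat_const; apply: eq_bigr => v _.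
by rewrite -(fib_card v) -sum1_card; apply: eq_bigl => d; rewrite inE.
Qed.


Lemma match_disj (E' M : {set {set D}}) e1 e2 : matching E' M -> e1 \in M -> e2 \in M ->
  e1 != e2 -> [disjoint e1 & e2].
Proof.
move=> mM h1 h2 ne; apply/pred0P => a /=; apply/negbTE/negP => /andP [a1 a2].
by move/eqP: ne; apply; apply: match_uniq mM h1 h2 a1 a2.
Qed.

Lemma two_in_fib v (e1 e2 : {set D}) : e1 \subset fib v -> e2 \subset fib v ->
  #|e1| = 2 -> #|e2| = 2 -> [disjoint e1 & e2] -> False.
Proof.
move=> s1 s2 c1 c2 dj.
have : #|e1 :|: e2| <= #|fib v| by apply: subset_leq_card; rewrite subUset s1 s2.
rewrite cardsU fib_card c1 c2.
by move: dj; rewrite -setI_eq0 => /eqP ->; rewrite cards0.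
Qed.

Definition key (e : {set D}) := [set (val a).1 | a in e].

Lemma triangle e : e \in E :\: O -> exists v, e \subset fib v /\ key e = [set v].
Proof.
rewrite inE => /andP [nO eE]; case/edge_inv: eE nO => a [b [h ->]] nO.
move: h; rewrite triE => /orP [/eqP eb|/andP [/eqP e1 _]].
  by move: nO; rewrite eb; case/negP; apply: imset_f.
exists (val a).1; split.
  by apply/subsetP => x; rewrite !inE => /orP[]/eqP->; rewrite ?e1 eqxx.
by rewrite /key imsetU !imset_set1 -e1 setUid.
Qed.

Lemma nu_EO : nu (E :\: O) <= #|T|.
Proof.
apply/bigmax_leqP => M mM.
have sM : M \subset E :\: O by case/andP: mM.
rewrite -(@card_in_imset _ _ key).
  apply: (@leq_trans #|[set [set v] | v : T]|); last first.
    by apply: leq_trans (leq_imset_card _ _) _.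
  apply: subset_leq_card; apply/subsetP => k; case/imsetP => e eM ->.
  by have [v [_ ->]] := triangle (subsetP sM _ eM); apply: imset_f.
move=> e1 e2 h1 h2 ek.
have [v1 [s1 k1]] := triangle (subsetP sM _ h1).
have [v2 [s2 k2]] := triangle (subsetP sM _ h2).
move: ek; rewrite k1 k2 => /set1_inj ev; subst v2.
apply/eqP; apply: contraT => ne.
have eE : forall e, e \in M -> e \in E by move=> e /(subsetP sM); rewrite inE => /andP[].
by case: (two_in_fib s1 s2 (edge_card (eE _ h1)) (edge_card (eE _ h2)) (match_disj mM h1 h2 ne)).
Qed.

Lemma fib_edge v (F : {set {set D}}) : matching E F ->
  exists e, (e \in E :\: F) && (e \subset fib v).
Proof.
move=> mF; have : 2 < #|fib v| by rewrite fib_card.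
case/card_gt2P => x [y [z [[xv yv zv] [xy yz zx]]]].
move: xv yv zv; rewrite !inE => /eqP xv /eqP yv /eqP zv.
have sub : forall a b, a \in fib v -> b \in fib v -> [set a; b] \subset fib v.
  by move=> a b ha hb; apply/subsetP => c /set2P [] ->.
have fx : x \in fib v by rewrite inE xv.
have fy : y \in fib v by rewrite inE yv.
have fz : z \in fib v by rewrite inE zv.
have exy : [set x; y] \in E by apply: edgeE; rewrite triE xv yv eqxx xy orbT.
have eyz : [set y; z] \in E by apply: edgeE; rewrite triE yv zv eqxx yz orbT.
case hxy: ([set x; y] \in F); last first.
  by exists [set x; y]; rewrite inE hxy exy sub.
case hyz: ([set y; z] \in F); last first.
  by exists [set y; z]; rewrite inE hyz eyz sub.
have := match_uniq mF hxy hyz (set22 _ _) (set21 _ _) => /setP /(_ x).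
rewrite !inE eqxx /= => /esym /orP [] /eqP exy'.
  by move: xy; rewrite exy' eqxx.
by move: zx; rewrite exy' eqxx.
Qed.

Lemma nu_lower (F : {set {set D}}) : matching E F -> #|T| <= nu (E :\: F).
Proof.
move=> mF.
pose g v := odflt set0 [pick e | (e \in E :\: F) && (e \subset fib v)].
have gs : forall v, (g v \in E :\: F) && (g v \subset fib v).
  move=> v; rewrite /g; case: pickP => [e //|/= none].
  by case: (fib_edge v mF) => e; rewrite (none e).
have gne : forall v, exists a, a \in g v.
  move=> v; apply/card_gt0P; case/andP: (gs v); rewrite inE => /andP [_ /edge_card ->] //.
have gv : forall v a, a \in g v -> (val a).1 = v.
  by move=> v a ha; case/andP: (gs v) => _ /subsetP /(_ _ ha); rewrite inE => /eqP.
have ginj : injective g.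
  by move=> v w e; case: (gne v) => a ha; rewrite -(gv _ _ ha) (gv w a) // -e.
have mM : matching (E :\: F) [set g v | v : T].
  apply/andP; split.
    by apply/subsetP => e /imsetP [v _ ->]; case/andP: (gs v).
  apply/forall_inP => e1 /imsetP [v _ ->]; apply/forall_inP => e2 /imsetP [w _ ->].
  apply/implyP => ne; apply/pred0P => a /=; apply/negbTE/negP => /andP [a1 a2].
  by move: ne; rewrite -(gv _ _ a1) (gv _ _ a2) eqxx.
apply: leq_trans (leq_bigmax_cond _ mM); by rewrite card_imset // cardsT.
Qed.


Lemma O_max : max_matching E O.
Proof. by rewrite max_matchingE O_match O_card eqxx. Qed.

Lemma bigmin_le (I : finType) (P : pred I) (F : I -> nat) x i0 :
  P i0 -> \big[minn/x]_(i | P i) F i <= F i0.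
Proof.
move=> Pi0; have : i0 \in index_enum I by rewrite mem_index_enum.
elim: (index_enum I) => // h t ih; rewrite inE big_cons.
case/orP => [/eqP <-|it]; first by rewrite Pi0 geq_minl.
by case: (P h); [apply: leq_trans (geq_minr _ _) (ih it)|apply: ih].
Qed.

Lemma lmin_eq : lmin E = #|T|.
Proof.
apply/eqP; rewrite eqn_leq; apply/andP; split.
  exact: leq_trans (bigmin_le _ _ O_max) nu_EO.
rewrite /lmin; elim/big_ind: _ => //.
- have h1 : #|T| * 2 <= #|O| * 2 by rewrite O_card card_D mulnC leq_mul2r /= orbT.
  rewrite leq_mul2r /= in h1.
  exact: leq_trans h1 (subset_leq_card O_sub).
- by move=> x y hx hy; rewrite leq_min hx hy.
- by move=> F /andP [mF _]; apply: nu_lower.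
Qed.

Lemma nu_le (E' : {set {set D}}) : E' \subset E -> nu E' * 2 <= #|D|.
Proof.
move=> sE; rewrite -leq_divRL //; apply/bigmax_leqP => M mM; rewrite leq_divRL //.
exact: match_le sE mM.
Qed.

Lemma Lmax_le : Lmax E * 2 <= #|D|.
Proof.
rewrite -leq_divRL //; apply/bigmax_leqP => F _; rewrite leq_divRL //.
by apply: nu_le; apply: subsetDl.
Qed.

Lemma Lmax_full : Lmax E * 2 = #|D| <->
  exists F M, [/\ max_matching E F, matching (E :\: F) M & #|M| * 2 = #|D|].
Proof.
split.
  have : 0 < #|[pred F | max_matching E F]| by apply/card_gt0P; exists O; apply: O_max.
  case/(eq_bigmax_cond (fun F => nu (E :\: F))) => F hF; rewrite /Lmax => -> h.
  have : 0 < #|[pred M | matching (E :\: F) M]|.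
    apply/card_gt0P; exists set0; rewrite inE /matching sub0set /=.
    by apply/forall_inP => e; rewrite inE.
  case/(eq_bigmax_cond (fun M : {set {set D}} => #|M|)) => M hM hn.
  by exists F, M; split => //; rewrite -h /nu hn.
case=> F [M [hF hM hc]]; apply/eqP; rewrite eqn_leq Lmax_le /= -{1}hc leq_mul2r /=.
apply: leq_trans (leq_bigmax_cond _ hF); exact: leq_bigmax_cond hM.
Qed.


Lemma deg3 a : #|[set e in E | a \in e]| <= 3.
Proof.
apply: (@leq_trans #|[set [set a; b] | b in [set b | tr a b]]|).
  apply: subset_leq_card; apply/subsetP => e; rewrite inE => /andP [eE ae].
  by case: (edge_at eE ae) => b [h ->]; apply: imset_f; rewrite inE.
apply: leq_trans (leq_imset_card _ _) _.
apply: (@leq_trans #|rev a |: (fib (val a).1 :\ a)|).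
  apply: subset_leq_card; apply/subsetP => b; rewrite inE triE.
  case/orP => [/eqP ->|/andP [e ne]]; first by rewrite setU11.
  by rewrite !inE [b == a]eq_sym ne /= [(val b).1 == _]eq_sym e orbT.
rewrite cardsU1; have := cardsD1 a (fib (val a).1); rewrite fib_card inE eqxx /= => h.
have -> : #|fib (val a).1 :\ a| = 2 by case: h.
by case: (_ \notin _).
Qed.

Lemma four_edges a e1 e2 e3 e4 : e1 \in E -> e2 \in E -> e3 \in E -> e4 \in E ->
  a \in e1 -> a \in e2 -> a \in e3 -> a \in e4 ->
  e1 != e2 -> e1 != e3 -> e1 != e4 -> e2 != e3 -> e2 != e4 -> e3 != e4 -> False.
Proof.
move=> E1 E2 E3 E4 a1 a2 a3 a4 n12 n13 n14 n23 n24 n34.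
have : #|e1 |: (e2 |: [set e3; e4])| <= 3.
  apply: leq_trans (deg3 a); apply: subset_leq_card; apply/subsetP => e.
  by rewrite !inE => /or4P [] /eqP ->; rewrite ?E1 ?E2 ?E3 ?E4.
by rewrite !cardsU1 cards1 !inE (negbTE n34) (negbTE n12) (negbTE n13) (negbTE n14) (negbTE n23) (negbTE n24).
Qed.


Lemma set2_eq (a b c : D) : a != b -> [set a; b] = [set a; c] -> b = c.
Proof.
move=> ab /setP /(_ b); rewrite !inE eqxx orbT eq_sym (negbTE ab) /=.
by move/esym/eqP.
Qed.

Lemma ne_edges (a b c : D) : a != b -> b != c -> [set a; b] != [set a; c].
Proof. by move=> ab bc; apply: contra_neq bc; apply: set2_eq. Qed.

Lemma fib_third v d1 d2 : exists2 d3, d3 \in fib v & (d3 != d1) && (d3 != d2).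
Proof.
have : ~~ (fib v \subset [set d1; d2]).
  apply/negP => /subset_leq_card; rewrite fib_card cards2.
  by case: (d1 != d2).
case/subsetPn => d3 h3; rewrite !inE negb_or => hn; by exists d3.
Qed.

Lemma same_fib_tr d1 d2 : (val d1).1 = (val d2).1 -> d1 != d2 -> tr d1 d2.
Proof. by move=> e ne; rewrite triE e eqxx ne orbT. Qed.

Lemma rev_ne d1 d2 : (val d1).1 = (val d2).1 -> rev d1 != d2.
Proof.
move=> e; apply/negP => /eqP h; have := dart_neq d1.
by rewrite -[X in _ != X]/((val (rev d1)).1) h e eqxx.
Qed.

Section Col.
Variables (F M : {set {set D}}).
Hypotheses (hF : max_matching E F) (mM : matching (E :\: F) M) (cM : #|M| * 2 = #|D|).

Definition col (e : {set D}) : 'I_3 := if e \in F then c0 else if e \in M then c1 else c2.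

Lemma colP a e1 e2 : e1 \in E -> e2 \in E -> a \in e1 -> a \in e2 -> e1 != e2 ->
  col e1 != col e2.
Proof.
move=> E1 E2 a1 a2 ne.
move: hF; rewrite max_matchingE => /andP [mF /eqP cF].
have sED : E :\: F \subset E by apply: subsetDl.
have [fa fF afa] := match_cover a (subxx E) mF cF.
have [ma maM ama] := match_cover a sED mM cM.
have maF : ma \notin F.
  by case/andP: mM => /subsetP /(_ _ maM); rewrite inE => /andP [].
have maE : ma \in E.
  by case/andP: mM => /subsetP /(_ _ maM); rewrite inE => /andP [].
have faE : fa \in E by case/andP: mF => /subsetP /(_ _ fF).
rewrite /col; case h1: (e1 \in F); case h2: (e2 \in F).
- by move: ne; rewrite (match_uniq mF h1 h2 a1 a2) eqxx.
- by case: (e2 \in M).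
- by case: (e1 \in M).
case m1: (e1 \in M); case m2: (e2 \in M) => //.
  by move: ne; rewrite (match_uniq mM m1 m2 a1 a2) eqxx.
exfalso; apply: (four_edges E1 E2 faE maE a1 a2 afa ama ne).
- by apply: contraFneq h1 => ->.
- by apply: contraFneq m1 => ->.
- by apply: contraFneq h2 => ->.
- by apply: contraFneq m2 => ->.
- by apply: contraNneq maF => <-.
Qed.

Lemma col_outer d1 d2 : (val d1).1 = (val d2).1 -> d1 != d2 ->
  col [set d1; rev d1] != col [set d2; rev d2].
Proof.
move=> e12 n12.
have [d3 f3 /andP [n31 n32]] := fib_third (val d1).1 d1 d2.
move: f3; rewrite inE => /eqP e3.
have t12 : tr d1 d2 by apply: same_fib_tr.
have t13 : tr d1 d3 by apply: same_fib_tr; [rewrite e3 | rewrite eq_sym].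
have t23 : tr d2 d3 by apply: same_fib_tr; [rewrite e3 | rewrite eq_sym].
have nr1 : d1 != rev d1 by apply: tri_neq (tri_rev d1).
have nr2 : d2 != rev d2 by apply: tri_neq (tri_rev d2).
have A1 : col [set d1; rev d1] != col [set d1; d2].
  apply: (colP (a:=d1)); rewrite ?edgeE ?tri_rev ?setU11 //.
  by apply: ne_edges => //; apply: rev_ne.
have A2 : col [set d1; rev d1] != col [set d1; d3].
  apply: (colP (a:=d1)); rewrite ?edgeE ?tri_rev ?setU11 //.
  by apply: ne_edges => //; apply: rev_ne; rewrite e3.
have A3 : col [set d1; d2] != col [set d1; d3].
  apply: (colP (a:=d1)); rewrite ?edgeE ?setU11 //.
  by apply: ne_edges; rewrite // eq_sym.
have A4 : col [set d2; d3] != col [set d1; d2].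
  apply: (colP (a:=d2)); rewrite ?edgeE ?setU11 ?set22 //.
  by rewrite [[set d1; d2]]setUC; apply: ne_edges; rewrite // eq_sym.
have A5 : col [set d2; d3] != col [set d1; d3].
  apply: (colP (a:=d3)); rewrite ?edgeE ?set22 //.
  by rewrite [[set d2; d3]]setUC [[set d1; d3]]setUC; apply: ne_edges; rewrite // eq_sym.
have A6 : col [set d2; rev d2] != col [set d2; d3].
  apply: (colP (a:=d2)); rewrite ?edgeE ?tri_rev ?setU11 //.
  by apply: ne_edges => //; apply: rev_ne; rewrite -e12 e3.
have := I3_cover (col [set d2; d3]) A1 A3 A2.
rewrite (negbTE A4) (negbTE A5) !orbF => h.
by rewrite -(eqP h) eq_sym.
Qed.

Lemma dart_pair (d d' : D) :
  [set (val d').1; (val d').2] = [set (val d).1; (val d).2] -> d' = d \/ d' = rev d.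
Proof.
move/setP => h.
have := h (val d').1; have := h (val d').2; rewrite !inE !eqxx orbT /=.
have nxy := dart_neq d'; have nab := dart_neq d.
move=> /esym /orP [] /eqP ey /esym /orP [] /eqP ex.
- by move: nxy; rewrite ex ey eqxx.
- by right; apply/eqP; rewrite dart_eq val_rev /= ex ey !eqxx.
- by left; apply/eqP; rewrite dart_eq ex ey !eqxx.
- by move: nxy; rewrite ex ey eqxx.
Qed.

Definition cG (S : {set T}) : 'I_3 :=
  if [pick d : D | [set (val d).1; (val d).2] == S] is Some d
  then col [set d; rev d] else c0.

Lemma cG_dart d : cG [set (val d).1; (val d).2] = col [set d; rev d].
Proof.
rewrite /cG; case: pickP => [d' /eqP h|none]; last by have := none d; rewrite eqxx.
by case: (dart_pair h) => ->; rewrite ?rev_rev // setUC.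
Qed.

Lemma colorable_of : three_edge_colorable r.
Proof.
exists cG => x y z hy hz nyz.
pose d1 : D := @Sub _ _ D (x, y) hy.
pose d2 : D := @Sub _ _ D (x, z) hz.
have -> : [set x; y] = [set (val d1).1; (val d1).2] by [].
have -> : [set x; z] = [set (val d2).1; (val d2).2] by [].
rewrite !cG_dart; apply: col_outer => //.
by rewrite dart_eq /= eqxx.
Qed.

End Col.


Section Good.
Variable c : {set T} -> 'I_3.
Hypothesis hc : forall x y z : T, r x y -> r x z -> y != z -> c [set x; y] != c [set x; z].

Definition k (d : D) := c [set (val d).1; (val d).2].

Lemma k_rev d : k (rev d) = k d.
Proof. by rewrite /k val_rev /= setUC. Qed.

Lemma k_fib a b : (val a).1 = (val b).1 -> a != b -> k a != k b.
Proof.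
move=> e ne; rewrite /k e; apply: hc.
- by rewrite -e; apply: (valP a).
- exact: (valP b).
by move: ne; rewrite dart_eq e eqxx.
Qed.

Definition good j (a b : D) :=
  ((b == rev a) && (k a == j)) || (((val a).1 == (val b).1) && (k a != j) && (k b != j)).

Lemma rev_fib a : ((val a).1 == (val (rev a)).1) = false.
Proof. by rewrite val_rev /=; apply/negbTE/dart_neq. Qed.

Lemma good_sym j a b : good j a b = good j b a.
Proof.
rewrite /good; case: (b =P rev a) => [->|nb].
  by rewrite rev_rev eqxx k_rev rev_fib [((val (rev a)).1 == _)]eq_sym rev_fib.
have -> : (a == rev b) = false by apply/eqP => h; apply: nb; rewrite h rev_rev.
by rewrite /= eq_sym -!andbA [(k b != j) && _]andbC.
Qed.

Definition S j := [set [set p.1; p.2] | p in [pred p : D * D | tr p.1 p.2 && good j p.1 p.2]].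

Lemma S_at j e a : e \in S j -> a \in e -> exists b, (tr a b && good j a b) /\ e = [set a; b].
Proof.
case/imsetP => [[x y]] /= /andP [t g] -> /set2P [] ->.
  by exists y; rewrite t g.
by exists x; rewrite tri_sym good_sym t g setUC.
Qed.

Lemma S_sub j : S j \subset E.
Proof. by apply/subsetP => e /imsetP [[x y]] /= /andP [t _] ->; apply: edgeE. Qed.

Lemma good_uniq j a b b' : tr a b -> tr a b' -> good j a b -> good j a b' -> b = b'.
Proof.
move=> t t'; rewrite /good.
case: (k a =P j) => [ka|nka] /=; rewrite ?andbT ?andbF ?orbF.
  by move=> /eqP -> /eqP ->.
move=> /andP [/eqP e kb] /andP [/eqP e' kb']; apply/eqP; apply: contraT => nbb.
move/eqP: nka => nka.
have := I3_cover j (k_fib e (tri_neq t)) (k_fib _ nbb) (k_fib e' (tri_neq t')).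
rewrite eq_sym (negbTE nka) eq_sym (negbTE kb) eq_sym (negbTE kb') //.
by apply; rewrite -e e'.
Qed.

Lemma good_ex j a : exists b, tr a b && good j a b.
Proof.
case: (k a =P j) => [ka|nka].
  by exists (rev a); rewrite tri_rev /good eqxx ka eqxx.
have [b fb /andP [nba _]] := fib_third (val a).1 a a.
have [b' fb' /andP [nb'a nb'b]] := fib_third (val a).1 a b.
move: fb fb'; rewrite !inE => /eqP eb /eqP eb'.
have eq_sym_neq : forall x y : D, x != y -> y != x by move=> x y; rewrite eq_sym.
have nab : a != b by rewrite eq_sym.
have nab' : a != b' by rewrite eq_sym.
have tb : tr a b by apply: same_fib_tr.
have tb' : tr a b' by apply: same_fib_tr.
have := I3_cover j (k_fib (esym eb) nab) (k_fib (etrans eb (esym eb')) (eq_sym_neq _ _ nb'b)) (k_fib (esym eb') nab').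
move/eqP: nka => nka; rewrite eq_sym (negbTE nka) /= => /orP [] /eqP kj.
  exists b'; rewrite tb' /good.
  have -> : (b' == rev a) = false by apply/negbTE; rewrite eq_sym; apply: rev_ne.
  rewrite eb' eqxx nka /= kj; apply: k_fib; by rewrite // eb eb'.
exists b; rewrite tb /good.
have -> : (b == rev a) = false by apply/negbTE; rewrite eq_sym; apply: rev_ne.
rewrite eb eqxx nka /= kj; apply: k_fib; by rewrite // ?eb ?eb' // eq_sym.
Qed.

Lemma S_match j : matching E (S j).
Proof.
rewrite /matching S_sub /=; apply/forall_inP => e1 h1; apply/forall_inP => e2 h2.
apply/implyP => ne; apply/pred0P => a /=; apply/negbTE/negP => /andP [a1 a2].
have [b1 [/andP [t1 g1] e1E]] := S_at h1 a1.
have [b2 [/andP [t2 g2] e2E]] := S_at h2 a2.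
by move: ne; rewrite e1E e2E (good_uniq t1 t2 g1 g2) eqxx.
Qed.

Lemma S_card j : #|S j| * 2 = #|D|.
Proof.
rewrite -(match_card (subxx E) (S_match j)) -cardsT.
suff -> : cover (S j) = [set: D] by [].
apply/setP => d; rewrite inE; apply/bigcupP.
have [b /andP [t g]] := good_ex j d.
exists [set d; b]; last by rewrite setU11.
by apply/imsetP; exists (d, b); rewrite //= inE /= t g.
Qed.

Lemma S01 e : e \in S c0 -> e \in S c1 -> False.
Proof.
move=> h0 h1.
have : 0 < #|e| by rewrite (edge_card (subsetP (S_sub c0) _ h0)).
case/card_gt0P => a ae.
have [b0 [/andP [t0 g0] e0]] := S_at h0 ae.
have [b1 [/andP [t1 g1] e1]] := S_at h1 ae.
have eb : b0 = b1 by apply: (set2_eq (tri_neq t0)); rewrite -e0 -e1.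
subst b1; move: g0 g1; rewrite /good; case: (b0 =P rev a) => [->|nb] /=.
  by rewrite rev_fib /= !orbF => /eqP -> /eqP.
move=> /andP [/andP [/eqP ef ka0] kb0] /andP [/andP [_ ka1] kb1].
have := k_fib ef (tri_neq t0).
have := I3_cover (k a) (proj1 col3) (proj2 (proj2 col3)) (proj1 (proj2 col3)).
have := I3_cover (k b0) (proj1 col3) (proj2 (proj2 col3)) (proj1 (proj2 col3)).
rewrite (negbTE ka0) (negbTE ka1) (negbTE kb0) (negbTE kb1) /= => /eqP -> /eqP ->.
by rewrite eqxx.
Qed.

Lemma Lmax_of_col : Lmax E * 2 = #|D|.
Proof.
apply/Lmax_full; exists (S c0), (S c1); split.
- by rewrite max_matchingE S_match S_card eqxx.
- rewrite /matching; case/andP: (S_match c1) => _ ->; rewrite andbT.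
  apply/subsetP => e h; rewrite inE (subsetP (S_sub c1) _ h) andbT.
  by apply/negP => h0; apply: (S01 h0 h).
- exact: S_card.
Qed.

End Good.

End Main.

Theorem mainTheorem8 (T : finType) (r : rel T) :
  simple_graph r -> cubic r -> bridgeless r ->
  (three_edge_colorable r <->
   2 * Lmax (edges (tri_rel r)) = 3 * lmin (edges (tri_rel r))).
Proof.
case=> symr irrr cub _.
rewrite (lmin_eq symr irrr cub) -(card_D cub) mulnC.
split.
  by case=> c hc; apply: (Lmax_of_col symr irrr cub hc).
by move/(Lmax_full symr irrr) => [F [M [hF hM hc]]]; apply: (colorable_of symr irrr cub hF hM hc).
Qed.
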